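(* Let $\mathbb{Z}$ be a finite-dimensional Euclidean space, $L>0$, $\beta_k\in(0,1)$, $\eta_k=(1-\beta_k)/L$, $z^0,\tilde z^0,\tilde z^1,\dots\in\mathbb{Z}$, and $z^{k+1}=\beta_kz^0+(1-\beta_k)z^k-\eta_k\tilde z^k$ for $k\ge0$. Then for all $k\ge0$: (1) $z^{k+1}-z^k=\beta_k(z^0-z^k)-\frac{1-\beta_k}{L}\tilde z^k$; (2) $z^{k+1}-z^k=\frac{\beta_k}{1-\beta_k}(z^0-z^{k+1})-\frac1L\tilde z^k$; (3) $z^{k+1}-z^k=-\frac{1-\beta_k}{L}\tilde z^k+\sum_{i=0}^{k-1}\frac{\beta_k}{L}\Big(\prod_{j=i}^{k-1}(1-\beta_j)\Big)\tilde z^i$. Moreover, if $\beta_k=1/(k+2)$, then $\|z^1-z^0\|^2\le\frac1{4L^2}\|\tilde z^0\|^2$ and for $k\ge1$, \[\|z^{k+1}-z^k\|^2\le\frac{2(k+1)^2}{L^2(k+2)^2}\|\tilde z^k\|^2+\frac{2k}{L^2(k+1)^2(k+2)^2}\sum_{i=0}^{k-1}(i+1)^2\|\tilde z^i\|^2.\] *)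

(* Defs.v *)
(* The finite-dimensional Euclidean space is modelled as
   R^n = 'rV[R]_n with the standard Euclidean norm, R : realType. *)
From HB Require Import structures.
From mathcomp Require Import all_boot all_order all_algebra.
From mathcomp Require Import reals.
Set Implicit Arguments. Unset Strict Implicit. Unset Printing Implicit Defensive.
Import Order.TTheory GRing.Theory Num.Theory.
Local Open Scope ring_scope.

Definition enorm (R : realType) (n : nat) (v : 'rV[R]_n) : R :=
  Num.sqrt (\sum_(i < n) (v ord0 i) ^+ 2).

(* Main.v *)
Require Import Defs.
From HB Require Import structures.
From mathcomp Require Import all_boot all_order all_algebra.
From mathcomp Require Import reals.
From mathcomp Require Import ring lra.
Import Order.TTheory GRing.Theory Num.Theory.
Local Open Scope ring_scope.

Definition sq {R : realType} {n : nat} (v : 'rV[R]_n) : R :=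
  \sum_(i < n) (v ord0 i) ^+ 2.

Lemma sq_ge0 {R : realType} {n : nat} (v : 'rV[R]_n) : 0 <= sq v.
Proof. by apply: sumr_ge0 => i _; exact: sqr_ge0. Qed.

Lemma enorm_sq {R : realType} {n : nat} (v : 'rV[R]_n) : enorm v ^+ 2 = sq v.
Proof. by rewrite /enorm sqr_sqrtr // sq_ge0. Qed.

Lemma sqZ {R : realType} {n : nat} (c : R) (v : 'rV[R]_n) : sq (c *: v) = c ^+ 2 * sq v.
Proof. by rewrite /sq mulr_sumr; apply: eq_bigr => i _; rewrite mxE exprMn. Qed.

Lemma sqN {R : realType} {n : nat} (v : 'rV[R]_n) : sq (- v) = sq v.
Proof. by rewrite /sq; apply: eq_bigr => i _; rewrite mxE sqrrN. Qed.

Lemma sq_add {R : realType} {n : nat} (a b : 'rV[R]_n) : sq (a + b) <= 2 * sq a + 2 * sq b.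
Proof.
rewrite /sq !mulr_sumr -big_split; apply: ler_sum => i _; rewrite mxE /=.
have := sqr_ge0 (a ord0 i - b ord0 i); nra.
Qed.

Lemma cs_real {R : realType} (k : nat) (x : nat -> R) :
  (\sum_(0 <= i < k) x i) ^+ 2 <= k%:R * \sum_(0 <= i < k) x i ^+ 2.
Proof.
elim: k => [|k IH]; first by rewrite !big_geq // mul0r expr0n.
rewrite !big_nat_recr //=.
set S := \sum_(0 <= i < k) x i; set Q := \sum_(0 <= i < k) x i ^+ 2.
have H : 2 * S * x k <= Q + k%:R * x k ^+ 2.
  have -> : Q + k%:R * x k ^+ 2 = \sum_(0 <= i < k) (x i ^+ 2 + x k ^+ 2).
    by rewrite big_split /= sumr_const_nat subn0 mulr_natl.
  rewrite /S mulr_sumr mulr_suml; apply: ler_sum => i _.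
  have := sqr_ge0 (x i - x k); nra.
rewrite -/S -/Q in IH *.
rewrite -natr1; nra.
Qed.

Lemma sq_sum {R : realType} {n : nat} k (v : nat -> 'rV[R]_n) :
  sq (\sum_(0 <= i < k) v i) <= k%:R * \sum_(0 <= i < k) sq (v i).
Proof.
rewrite /sq.
under eq_bigr do rewrite summxE.
rewrite (exchange_big_dep xpredT) //= mulr_sumr.
by apply: ler_sum => c _; apply: cs_real.
Qed.

Lemma nzD {R : realType} (a m : nat) : (a.+1)%:R + m%:R != 0 :> R.
Proof. by rewrite -natrD pnatr_eq0. Qed.
Lemma nz1 {R : realType} (m : nat) : 1 + m%:R != 0 :> R.
Proof. by rewrite -(natrD R 1) pnatr_eq0. Qed.

Ltac nz L0 := repeat (apply/andP; split);
  first [exact: L0 | exact: nzD | exact: nz1 | idtac].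

Theorem lemma14 (R : realType) (n : nat) (L : R) (beta : nat -> R)
  (z zt : nat -> 'rV[R]_n) :
  0 < L ->
  (forall k, 0 < beta k < 1) ->
  (forall k, z k.+1 = beta k *: z 0%N + (1 - beta k) *: z k
                      - ((1 - beta k) / L) *: zt k) ->
  (forall k : nat,
     [/\ z k.+1 - z k = beta k *: (z 0%N - z k) - ((1 - beta k) / L) *: zt k,
         z k.+1 - z k = (beta k / (1 - beta k)) *: (z 0%N - z k.+1) - L^-1 *: zt k
       & z k.+1 - z k = - (((1 - beta k) / L) *: zt k)
           + \sum_(0 <= i < k)
               ((beta k / L) * \prod_(i <= j < k) (1 - beta j)) *: zt i])
  /\
  ((forall k : nat, beta k = 1 / (k.+2)%:R) ->
     enorm (z 1%N - z 0%N) ^+ 2 <= 1 / (4 * L ^+ 2) * enorm (zt 0%N) ^+ 2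
     /\
     (forall k : nat, (1 <= k)%N ->
        enorm (z k.+1 - z k) ^+ 2 <=
          (2 * (k.+1)%:R ^+ 2) / (L ^+ 2 * (k.+2)%:R ^+ 2) * enorm (zt k) ^+ 2
          + (2 * k%:R) / (L ^+ 2 * (k.+1)%:R ^+ 2 * (k.+2)%:R ^+ 2)
            * \sum_(0 <= i < k) (i.+1)%:R ^+ 2 * enorm (zt i) ^+ 2)).
Proof.
move=> HL Hb Hz.
have L0 : L != 0 by rewrite gt_eqF.
have b0 : forall k, 1 - beta k != 0.
  by move=> k; have /andP[_ h] := Hb k; rewrite subr_eq0 eq_sym lt_eqF.
have W : forall k, z 0%N - z k =
   \sum_(0 <= i < k) (L^-1 * \prod_(i <= j < k) (1 - beta j)) *: zt i.
  elim=> [|k IH]; first by rewrite subrr big_geq.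
  rewrite big_nat_recr //= big_nat1.
  rewrite (eq_big_nat _ _ (F2 := fun i => (1 - beta k) *:
        ((L^-1 * \prod_(i <= j < k) (1 - beta j)) *: zt i))); last first.
    move=> i /andP[_ hi]; rewrite big_nat_recr /=; last exact: ltnW.
    by rewrite scalerA; congr (_ *: _); ring.
  rewrite -scaler_sumr -IH Hz.
  by apply/rowP => j; rewrite !mxE; field.
have P3 : forall k, z k.+1 - z k = - (((1 - beta k) / L) *: zt k)
           + \sum_(0 <= i < k)
               ((beta k / L) * \prod_(i <= j < k) (1 - beta j)) *: zt i.
  move=> k.
  rewrite (eq_big_nat _ _ (F2 := fun i => beta k *:
        ((L^-1 * \prod_(i <= j < k) (1 - beta j)) *: zt i))); last first.
    by move=> i _; rewrite scalerA; congr (_ *: _); rewrite mulrA.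
  rewrite -scaler_sumr -W Hz.
  by apply/rowP => j; rewrite !mxE; ring.
split.
  move=> k; split => //.
    by rewrite Hz; apply/rowP => j; rewrite !mxE; ring.
  rewrite Hz; apply/rowP => j; rewrite !mxE; field.
  by rewrite b0 L0.
move=> Hbeta; split.
  rewrite P3 big_geq // addr0 -scaleNr !enorm_sq sqZ Hbeta le_eqVlt; apply/orP; left.
  apply/eqP; congr (_ * _); field; exact: L0.
move=> k k1.
have Pr : forall i, (i <= k)%N ->
    \prod_(i <= j < k) (1 - beta j) = (i.+1)%:R / (k.+1)%:R.
  elim: k {k1} => [|k IH] i hi.
    by move: hi; rewrite leqn0 => /eqP ->; rewrite big_geq // divff // pnatr_eq0.
  move: hi; rewrite leq_eqVlt => /orP[/eqP ->|hi].
    by rewrite big_geq // divff // pnatr_eq0.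
  rewrite big_nat_recr //= IH // Hbeta; field.
  nz L0.
set e := 1 / ((k.+2)%:R * L * (k.+1)%:R).
rewrite P3 (eq_big_nat _ _ (F2 := fun i => e *: ((i.+1)%:R *: zt i))); last first.
  move=> i /andP[_ hi]; rewrite scalerA Pr ?(ltnW hi) // Hbeta /e; congr (_ *: _).
  field; nz L0.
rewrite -scaler_sumr !enorm_sq.
under [X in _ <= _ + _ * X]eq_bigr do rewrite enorm_sq.
apply: le_trans (sq_add _ _) _.
rewrite sqN !sqZ; apply: lerD.
  rewrite le_eqVlt; apply/orP; left; apply/eqP; rewrite Hbeta; field.
  nz L0.
have H : sq (\sum_(0 <= i < k) (i.+1)%:R *: zt i) <=
    k%:R * \sum_(0 <= i < k) (i.+1)%:R ^+ 2 * sq (zt i).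
  apply: le_trans (sq_sum k (fun i => (i.+1)%:R *: zt i)) _.
  by under eq_bigr do rewrite sqZ.
have H2 : 2 * (e ^+ 2 * sq (\sum_(0 <= i < k) (i.+1)%:R *: zt i)) <=
   2 * (e ^+ 2 * (k%:R * \sum_(0 <= i < k) (i.+1)%:R ^+ 2 * sq (zt i))).
  by apply: ler_wpM2l => //; apply: ler_wpM2l => //; exact: sqr_ge0.
apply: le_trans H2 _; rewrite le_eqVlt; apply/orP; left; apply/eqP; rewrite /e.
field; nz L0.
Qed.
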